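(* Let $\Lambda_1,\Lambda_2$ be finite sets of formulas and let $\Gamma_1,\Gamma_2,\Delta_1,\Delta_2$ be finite multisets of formulas such that the sequent $\Gamma_1,\Gamma_2\Rightarrow\Delta_1,\Delta_2$ is provable in $\mathsf{Grz}_\infty$. Then there exists a formula $I$ such that $\mathit{pos}(I)\subseteq\mathit{neg}(\Gamma_1\Rightarrow\Delta_1)\cap\mathit{pos}(\Gamma_2\Rightarrow\Delta_2)$, $\mathit{neg}(I)\subseteq\mathit{pos}(\Gamma_1\Rightarrow\Delta_1)\cap\mathit{neg}(\Gamma_2\Rightarrow\Delta_2)$, and $$\mathsf{Grz}\vdash\bigwedge(\Lambda_1^\ast\cup\Gamma_1)\to\bigvee(\Delta_1\cup\{I\})\quad\text{and}\quad \mathsf{Grz}\vdash\bigwedge(\Lambda_2^\ast\cup\{I\}\cup\Gamma_2)\to\bigvee\Delta_2,$$ where $\Lambda^\ast=\{\Box(A\to\Box A)\mid A\in\Lambda\}$.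
   Context: Formulas are built from $\bot$ and atomic propositions using $\to$ and $\Box$; $\neg A:=A\to\bot$, $\top:=\neg\bot$, $A\wedge B:=\neg(A\to\neg B)$, $A\vee B:=\neg A\to B$, $\Diamond A:=\neg\Box\neg A$; empty conjunction is $\top$ and empty disjunction is $\bot$. The logic $\mathsf{Grz}$ is axiomatized by all Boolean tautologies, $\Box(A\to B)\to(\Box A\to\Box B)$, $\Box A\to\Box\Box A$, $\Box A\to A$, $\Box(\Box(A\to\Box A)\to A)\to\Box A$, with modus ponens and necessitation $A/\Box A$. A sequent is $\Gamma\Rightarrow\Delta$ with $\Gamma,\Delta$ finite multisets of formulas; $\Box\Pi$ denotes $\{\Box B:B\in\Pi\}$. The calculus $\mathsf{Grz}_\infty$ has initial sequents $\Gamma,p\Rightarrow p,\Delta$ ($p$ atomic), $\Gamma,\bot\Rightarrow\Delta$, and rules $(\to_L)$ from $\Gamma,B\Rightarrow\Delta$ and $\Gamma\Rightarrow A,\Delta$ infer $\Gamma,A\to B\Rightarrow\Delta$; $(\to_R)$ from $\Gamma,A\Rightarrow B,\Delta$ infer $\Gamma\Rightarrow A\to B,\Delta$; $(\mathsf{refl})$ from $\Gamma,B,\Box B\Rightarrow\Delta$ infer $\Gamma,\Box B\Rightarrow\Delta$; $(\Box)$ from left premise $\Gamma,\Box\Pi\Rightarrow A,\Delta$ and right premise $\Box\Pi\Rightarrow A$ infer $\Gamma,\Box\Pi\Rightarrow\Box A,\Delta$. An $\infty$-proof is a possibly infinite tree of sequents built by these rules with leaves labelled by initial sequents, in which every infinite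 branch passes through a right premise of $(\Box)$ infinitely often; a sequent is provable if it labels the root of an $\infty$-proof. For a formula or set of formulas $X$, $\mathit{pos}(X)$ ($\mathit{neg}(X)$) is the set of atoms with a positive (negative) occurrence in $X$, polarity being standard: $p$ is positive in $p$, polarity is preserved in $B$ within $A\to B$ and $\Box B$, and reversed in $A$ within $A\to B$. For a sequent, $\mathit{pos}(\Gamma\Rightarrow\Delta)=\mathit{pos}(\Delta)\cup\mathit{neg}(\Gamma)$ and $\mathit{neg}(\Gamma\Rightarrow\Delta)=\mathit{neg}(\Delta)\cup\mathit{pos}(\Gamma)$. *)

(* Defs.v *)
From Stdlib Require Import List Permutation Arith.
Import ListNotations.

Inductive formula : Type :=
| Var : nat -> formula
| Bot : formula
| Imp : formula -> formula -> formula
| Box : formula -> formula.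

Definition Neg (A : formula) : formula := Imp A Bot.
Definition Top : formula := Neg Bot.
Definition And (A B : formula) : formula := Neg (Imp A (Neg B)).
Definition Or (A B : formula) : formula := Imp (Neg A) B.
Definition Dia (A : formula) : formula := Neg (Box (Neg A)).

Fixpoint bigwedge (l : list formula) : formula :=
  match l with
  | [] => Top
  | [A] => A
  | A :: l' => And A (bigwedge l')
  end.
Fixpoint bigvee (l : list formula) : formula :=
  match l with
  | [] => Bot
  | [A] => A
  | A :: l' => Or A (bigvee l')
  end.

(* Boolean tautologies: true under every classical valuation that treats
   atoms and boxed formulas as propositional letters. *)
Fixpoint beval (v : formula -> bool) (A : formula) : bool :=
  match A with
  | Var p => v (Var p)
  | Bot => false
  | Imp B C => implb (beval v B) (beval v C)
  | Box B => v (Box B)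
  end.
Definition tautology (A : formula) : Prop := forall v, beval v A = true.

Inductive Grz : formula -> Prop :=
| Grz_taut : forall A, tautology A -> Grz A
| Grz_K : forall A B, Grz (Imp (Box (Imp A B)) (Imp (Box A) (Box B)))
| Grz_4 : forall A, Grz (Imp (Box A) (Box (Box A)))
| Grz_T : forall A, Grz (Imp (Box A) A)
| Grz_grz : forall A,
    Grz (Imp (Box (Imp (Box (Imp A (Box A))) A)) (Box A))
| Grz_mp : forall A B, Grz (Imp A B) -> Grz A -> Grz B
| Grz_nec : forall A, Grz A -> Grz (Box A).

(* Sequents: pairs of finite multisets, represented as lists
   (the rules are stated up to permutation). *)
Definition sequent : Type := (list formula * list formula)%type.

(* One inference step of Grz_infty: conclusion and list of premises, each
   premise tagged with [true] iff it is the right premise of a (Box) rule.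
   Initial sequents are steps with no premises. *)
Inductive step : sequent -> list (bool * sequent) -> Prop :=
| st_ax : forall G D p, In (Var p) G -> In (Var p) D -> step (G, D) []
| st_bot : forall G D, In Bot G -> step (G, D) []
| st_impL : forall G G0 D A B,
    Permutation G (Imp A B :: G0) ->
    step (G, D) [(false, (B :: G0, D)); (false, (G0, A :: D))]
| st_impR : forall G D D0 A B,
    Permutation D (Imp A B :: D0) ->
    step (G, D) [(false, (A :: G, B :: D0))]
| st_refl : forall G G0 D B,
    Permutation G (Box B :: G0) ->
    step (G, D) [(false, (B :: Box B :: G0, D))]
| st_box : forall G G0 Pi D D0 A,
    Permutation G (G0 ++ map Box Pi) ->
    Permutation D (Box A :: D0) ->
    step (G, D) [(false, (G0 ++ map Box Pi, A :: D0));
                 (true, (map Box Pi, [A]))].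

CoInductive ptree : Type :=
| PNode : sequent -> list (bool * ptree) -> ptree.

Definition root (t : ptree) : sequent := match t with PNode s _ => s end.
Definition children (t : ptree) : list (bool * ptree) :=
  match t with PNode _ cs => cs end.

CoInductive locally_correct : ptree -> Prop :=
| lc_node : forall s cs,
    step s (map (fun c => (fst c, root (snd c))) cs) ->
    (forall c, In c cs -> locally_correct (snd c)) ->
    locally_correct (PNode s cs).

Definition infinite_branch (t : ptree) (f : nat -> ptree) (b : nat -> bool) : Prop :=
  f 0 = t /\ forall n, In (b n, f (S n)) (children (f n)).

Definition inf_proof (t : ptree) : Prop :=
  locally_correct t /\
  forall f b, infinite_branch t f b ->
    forall n, exists m, n <= m /\ b m = true.

Definition GrzInf_provable (s : sequent) : Prop :=
  exists t, root t = s /\ inf_proof t.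

Fixpoint pol (b : bool) (A : formula) (p : nat) : Prop :=
  match A with
  | Var q => b = true /\ p = q
  | Bot => False
  | Imp B C => pol (negb b) B p \/ pol b C p
  | Box B => pol b B p
  end.
Definition pos (A : formula) (p : nat) : Prop := pol true A p.
Definition neg (A : formula) (p : nat) : Prop := pol false A p.
Definition posL (X : list formula) (p : nat) : Prop := exists A, In A X /\ pos A p.
Definition negL (X : list formula) (p : nat) : Prop := exists A, In A X /\ neg A p.
Definition posS (s : sequent) (p : nat) : Prop := posL (snd s) p \/ negL (fst s) p.
Definition negS (s : sequent) (p : nat) : Prop := negL (snd s) p \/ posL (fst s) p.

Definition star (A : formula) : formula := Box (Imp A (Box A)).

(* Main.v *)
Require Import Defs.
From Stdlib Require Import List Permutation Arith Lia Bool Classical ClassicalEpsilon.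
Import ListNotations.

Definition sat v X := beval v X = true.

Lemma sat_imp v a b : sat v (Imp a b) <-> (sat v a -> sat v b).
Proof. unfold sat; simpl; destruct (beval v a), (beval v b); simpl; intuition congruence. Qed.
Lemma sat_bot v : ~ sat v Bot.
Proof. unfold sat; simpl; congruence. Qed.
Lemma sat_dec v a : sat v a \/ ~ sat v a.
Proof. unfold sat; destruct (beval v a); auto. Qed.
Lemma sat_neg v a : sat v (Neg a) <-> ~ sat v a.
Proof. unfold Neg; rewrite sat_imp; generalize (sat_bot v); tauto. Qed.
Lemma sat_or v a b : sat v (Or a b) <-> sat v a \/ sat v b.
Proof. unfold Or; rewrite sat_imp, sat_neg; generalize (sat_dec v a); tauto. Qed.
Lemma sat_and v a b : sat v (And a b) <-> sat v a /\ sat v b.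
Proof. unfold And; rewrite sat_neg, sat_imp, sat_neg; generalize (sat_dec v a) (sat_dec v b); tauto. Qed.
Lemma sat_top v : sat v Top.
Proof. unfold Top; rewrite sat_neg; apply sat_bot. Qed.

Lemma sat_wedge v l : sat v (bigwedge l) <-> (forall x, In x l -> sat v x).
Proof.
  induction l as [|a l IH].
  - simpl; split; [intros _ x []| intros _; apply sat_top].
  - destruct l as [|b l].
    + simpl; split; [intros H x [<-|[]]; auto | intros H; apply H; auto].
    + change (bigwedge (a :: b :: l)) with (And a (bigwedge (b :: l))).
      rewrite sat_and, IH. split.
      * intros [H1 H2] x [<-|Hx]; auto.
      * intros H; split; [apply H; left; auto| intros x Hx; apply H; right; auto].
Qed.

Lemma sat_vee v l : sat v (bigvee l) <-> (exists x, In x l /\ sat v x).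
Proof.
  induction l as [|a l IH].
  - simpl; split; [intros H; exfalso; apply (sat_bot v); exact H| intros [x [[] _]]].
  - destruct l as [|b l].
    + simpl; split; [intros H; exists a; auto | intros [x [[<-|[]] H]]; auto].
    + change (bigvee (a :: b :: l)) with (Or a (bigvee (b :: l))).
      rewrite sat_or, IH. split.
      * intros [H|[x [Hx H]]]; [exists a| exists x]; simpl; auto.
      * intros [x [[<-|Hx] H]]; [left|right; exists x]; auto.
Qed.

Definition imps (l : list formula) (b : formula) := fold_right Imp b l.

Lemma sat_imps v l b : sat v (imps l b) <-> ((forall x, In x l -> sat v x) -> sat v b).
Proof.
  induction l as [|a l IH]; simpl.
  - split; auto. intros H; apply H; intros x [].
  - rewrite sat_imp, IH. split.
    + intros H H2; apply H; auto.
    + intros H Ha Hl; apply H; intros x [<-|Hx]; auto.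
Qed.

Lemma grz_from (Hs : list formula) (Y : formula) :
  (forall X, In X Hs -> Grz X) ->
  (forall v, (forall X, In X Hs -> sat v X) -> sat v Y) -> Grz Y.
Proof.
  revert Y; induction Hs as [|X Hs IH]; intros Y HG Hv.
  - apply Grz_taut; intros v; apply Hv; intros x [].
  - apply (Grz_mp X Y).
    + apply IH.
      * intros Z HZ; apply HG; right; auto.
      * intros v H; rewrite sat_imp; intros HX; apply Hv; intros Z [<-|HZ]; auto.
    + apply HG; left; auto.
Qed.

Lemma grz1 X1 Y : Grz X1 -> (forall v, sat v X1 -> sat v Y) -> Grz Y.
Proof. intros H1 H; apply (grz_from [X1]); [intros X [<-|[]]; auto| intros v Hv; apply H, Hv; simpl; auto]. Qed.
Lemma grz2 X1 X2 Y : Grz X1 -> Grz X2 -> (forall v, sat v X1 -> sat v X2 -> sat v Y) -> Grz Y.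
Proof. intros H1 H2 H; apply (grz_from [X1;X2]); [intros X [<-|[<-|[]]]; auto| intros v Hv; apply H; apply Hv; simpl; tauto]. Qed.
Lemma grz3 X1 X2 X3 Y : Grz X1 -> Grz X2 -> Grz X3 -> (forall v, sat v X1 -> sat v X2 -> sat v X3 -> sat v Y) -> Grz Y.
Proof. intros H1 H2 H3 H; apply (grz_from [X1;X2;X3]); [intros X [<-|[<-|[<-|[]]]]; auto| intros v Hv; apply H; apply Hv; simpl; tauto]. Qed.
Lemma grz4 X1 X2 X3 X4 Y : Grz X1 -> Grz X2 -> Grz X3 -> Grz X4 -> (forall v, sat v X1 -> sat v X2 -> sat v X3 -> sat v X4 -> sat v Y) -> Grz Y.
Proof. intros H1 H2 H3 H4 H; apply (grz_from [X1;X2;X3;X4]); [intros X [<-|[<-|[<-|[<-|[]]]]]; auto| intros v Hv; apply H; apply Hv; simpl; tauto]. Qed.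
Lemma grz5 X1 X2 X3 X4 X5 Y : Grz X1 -> Grz X2 -> Grz X3 -> Grz X4 -> Grz X5 -> (forall v, sat v X1 -> sat v X2 -> sat v X3 -> sat v X4 -> sat v X5 -> sat v Y) -> Grz Y.
Proof. intros H1 H2 H3 H4 H5 H; apply (grz_from [X1;X2;X3;X4;X5]); [intros X [<-|[<-|[<-|[<-|[<-|[]]]]]]; auto| intros v Hv; apply H; apply Hv; simpl; tauto]. Qed.

Lemma box_imps_aux l b : Grz (Imp (Box (imps l b)) (imps (map Box l) (Box b))).
Proof.
  induction l as [|X l IH]; simpl.
  - apply Grz_taut; intros v; simpl; destruct (v (Box b)); reflexivity.
  - apply (grz2 _ _ _ (Grz_K X (imps l b)) IH).
    intros v H1 H2. rewrite sat_imp in *. intros H3. rewrite sat_imp. intros H4.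
    apply H2. specialize (H1 H3); rewrite sat_imp in H1; auto.
Qed.

Lemma box_imps l b : Grz (imps l b) -> Grz (imps (map Box l) (Box b)).
Proof.
  intros H. apply (grz2 _ _ _ (Grz_nec _ H) (box_imps_aux l b)).
  intros v H1 H2; rewrite sat_imp in H2; auto.
Qed.

Lemma box_lift C Y : Grz (Imp (bigwedge (map Box C)) Y) -> Grz (Imp (bigwedge (map Box C)) (Box Y)).
Proof.
  intros H.
  assert (H1 : Grz (imps (map Box C) Y)).
  { apply (grz1 _ _ H). intros v Hv; rewrite sat_imps; rewrite sat_imp, sat_wedge in Hv; auto. }
  apply box_imps in H1.
  apply (grz_from (imps (map Box (map Box C)) (Box Y) :: map (fun c => Imp (Box c) (Box (Box c))) C)).
  - intros X [<-|HX]; auto. apply in_map_iff in HX. destruct HX as [c [<- _]]; apply Grz_4.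
  - intros v Hv. rewrite sat_imp, sat_wedge. intros HC.
    assert (HI := Hv _ (or_introl eq_refl)). rewrite sat_imps in HI. apply HI.
    intros x Hx. apply in_map_iff in Hx. destruct Hx as [y [<- Hy]].
    apply in_map_iff in Hy. destruct Hy as [c [<- Hc]].
    assert (H4 := Hv (Imp (Box c) (Box (Box c)))). rewrite sat_imp in H4. apply H4.
    + right; apply in_map_iff; exists c; auto.
    + apply HC, in_map; auto.
Qed.

Definition der L R := Grz (Imp (bigwedge L) (bigvee R)).
Definition SatSeq v L R := (forall x, In x L -> sat v x) -> exists x, In x R /\ sat v x.
Lemma sat_der v L R : sat v (Imp (bigwedge L) (bigvee R)) <-> SatSeq v L R.
Proof. unfold SatSeq; rewrite sat_imp, sat_wedge, sat_vee; tauto. Qed.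

Lemma grz0 Y : (forall v, sat v Y) -> Grz Y.
Proof. intros H; apply (grz_from []); [intros X []| intros v _; auto]. Qed.

Definition PolOK I (a b c d : nat -> Prop) :=
  (forall p, pos I p -> a p /\ b p) /\ (forall p, neg I p -> c p /\ d p).

Definition Interp L1 L2 G1 D1 G2 D2 := exists I,
  PolOK I (negS (G1,D1)) (posS (G2,D2)) (posS (G1,D1)) (negS (G2,D2)) /\
  der (map star L1 ++ G1) (D1 ++ [I]) /\ der (map star L2 ++ I :: G2) D2.

Lemma pol_mono I a b c d a' b' c' d' : PolOK I a b c d ->
  (forall p, a p -> a' p) -> (forall p, b p -> b' p) ->
  (forall p, c p -> c' p) -> (forall p, d p -> d' p) -> PolOK I a' b' c' d'.
Proof. intros [H1 H2] ? ? ? ?; split; intros p Hp; [destruct (H1 p Hp)|destruct (H2 p Hp)]; auto. Qed.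

Lemma pol_or K J a b c d : PolOK K a b c d -> PolOK J a b c d -> PolOK (Or K J) a b c d.
Proof. unfold PolOK, pos, neg; simpl; intros [H1 H2] [H3 H4]; split; intros p Hp; firstorder. Qed.
Lemma pol_and K J a b c d : PolOK K a b c d -> PolOK J a b c d -> PolOK (And K J) a b c d.
Proof. unfold PolOK, pos, neg; simpl; intros [H1 H2] [H3 H4]; split; intros p Hp; firstorder. Qed.
Lemma pol_dia J a b c d : PolOK J a b c d -> PolOK (Dia J) a b c d.
Proof. unfold PolOK, pos, neg; simpl; intros [H1 H2]; split; intros p Hp; firstorder. Qed.
Lemma pol_box J a b c d : PolOK J a b c d -> PolOK (Box J) a b c d.
Proof. unfold PolOK, pos, neg; simpl; intros [H1 H2]; split; intros p Hp; firstorder. Qed.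
Lemma pol_bot a b c d : PolOK Bot a b c d.
Proof. unfold PolOK, pos, neg; simpl; split; intros p []. Qed.
Lemma pol_top a b c d : PolOK Top a b c d.
Proof. unfold PolOK, pos, neg; simpl; split; intros p Hp; firstorder. Qed.

Lemma posL_cons x l p : posL (x::l) p <-> pos x p \/ posL l p.
Proof. unfold posL; simpl; split; [intros [A [[<-|H] H2]]; eauto| intros [H|[A [H1 H2]]]; eauto]. Qed.
Lemma negL_cons x l p : negL (x::l) p <-> neg x p \/ negL l p.
Proof. unfold negL; simpl; split; [intros [A [[<-|H] H2]]; eauto| intros [H|[A [H1 H2]]]; eauto]. Qed.
Lemma posL_app l1 l2 p : posL (l1++l2) p <-> posL l1 p \/ posL l2 p.
Proof. unfold posL; split; [intros [A [H H2]]; apply in_app_iff in H as [H|H]; eauto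
  | intros [[A [H1 H2]]|[A [H1 H2]]]; exists A; rewrite in_app_iff; auto]. Qed.
Lemma negL_app l1 l2 p : negL (l1++l2) p <-> negL l1 p \/ negL l2 p.
Proof. unfold negL; split; [intros [A [H H2]]; apply in_app_iff in H as [H|H]; eauto
  | intros [[A [H1 H2]]|[A [H1 H2]]]; exists A; rewrite in_app_iff; auto]. Qed.
Lemma posL_nil p : posL [] p <-> False.
Proof. unfold posL; simpl; firstorder. Qed.
Lemma negL_nil p : negL [] p <-> False.
Proof. unfold negL; simpl; firstorder. Qed.
Lemma posL_perm l l' p : Permutation l l' -> posL l p -> posL l' p.
Proof. intros HP [A [H1 H2]]; exists A; split; auto; eapply Permutation_in; eauto. Qed.
Lemma negL_perm l l' p : Permutation l l' -> negL l p -> negL l' p.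
Proof. intros HP [A [H1 H2]]; exists A; split; auto; eapply Permutation_in; eauto. Qed.

Ltac polinc := let p := fresh "p" in intros p; unfold negS, posS; simpl;
  rewrite ?posL_cons, ?posL_app, ?negL_cons, ?negL_app, ?posL_nil, ?negL_nil;
  unfold pos, neg; simpl; tauto.

Ltac polfin := eapply pol_mono; [eassumption| polinc .. ].

Lemma map_star_box L Pi : map star L ++ map Box Pi = map Box (map (fun x => Imp x (Box x)) L ++ Pi).
Proof. rewrite map_app, map_map; reflexivity. Qed.

Ltac inapp := rewrite ?in_app_iff in *; simpl in *; rewrite ?in_app_iff in *; simpl in *.

Lemma Interp_perm L1 L2 G1 D1 G2 D2 G1' D1' G2' D2' :
  Permutation G1 G1' -> Permutation D1 D1' -> Permutation G2 G2' -> Permutation D2 D2' ->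
  Interp L1 L2 G1 D1 G2 D2 -> Interp L1 L2 G1' D1' G2' D2'.
Proof.
  intros P1 P2 P3 P4 [I [HP [H1 H2]]]; exists I; split; [|split].
  - eapply pol_mono; [eassumption|..]; unfold negS, posS; simpl; intros p [H|H];
    first [left; solve [eauto using posL_perm, negL_perm] | right; solve [eauto using posL_perm, negL_perm]].
  - apply (grz1 _ _ H1); intros v Hv; rewrite sat_der in *; intros HL.
    destruct Hv as [x [Hx Hs]].
    + intros y Hy; apply HL. apply in_app_iff in Hy as [Hy|Hy]; apply in_app_iff; auto.
      right; eapply Permutation_in; eauto.
    + exists x; split; auto. apply in_app_iff in Hx as [Hx|Hx]; apply in_app_iff; auto.
      left; eapply Permutation_in; eauto.
  - apply (grz1 _ _ H2); intros v Hv; rewrite sat_der in *; intros HL.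
    destruct Hv as [x [Hx Hs]].
    + intros y Hy; apply HL. apply in_app_iff in Hy as [Hy|[<-|Hy]]; apply in_app_iff; simpl; auto.
      right; right; eapply Permutation_in; eauto.
    + exists x; split; auto. eapply Permutation_in; eauto.
Qed.

Ltac ctx := let y := fresh "y" in let Hy := fresh "Hy" in
  intros y Hy; match goal with HL : forall x, In x _ -> sat _ x |- _ => apply HL end; inapp; tauto.
Ltac start := intros v; rewrite ?sat_der; unfold SatSeq in *; intros HL.
Ltac fin x := exists x; split; [inapp; tauto| auto].

Lemma case_ax L1 L2 G1 D1 G2 D2 p :
  In (Var p) (G1 ++ G2) -> In (Var p) (D1 ++ D2) -> Interp L1 L2 G1 D1 G2 D2.
Proof.
  intros HG HD; apply in_app_iff in HG as [HG|HG]; apply in_app_iff in HD as [HD|HD].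
  - exists Bot; split; [apply pol_bot|split].
    + apply grz0; start; exists (Var p); split; [inapp; tauto| apply HL; inapp; tauto].
    + apply grz0; start. exfalso; apply (sat_bot v); apply HL; inapp; tauto.
  - exists (Var p); split; [|split].
    + split; intros q Hq; unfold pos, neg in Hq; simpl in Hq; destruct Hq as [Hb ->]; try discriminate;
      unfold negS, posS; simpl; split; [right|left]; (exists (Var p); split; [auto| unfold pos; simpl; auto]).
    + apply grz0; start; exists (Var p); split; [inapp; tauto| apply HL; inapp; tauto].
    + apply grz0; start; exists (Var p); split; [inapp; tauto| apply HL; inapp; tauto].
  - exists (Neg (Var p)); split; [|split].
    + split; intros q Hq; unfold pos, neg in Hq; simpl in Hq; destruct Hq as [[Hb ->]|[]]; try discriminate;
      unfold negS, posS; simpl; split; [left|right]; (exists (Var p); split; [auto| unfold pos; simpl; auto]).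
    + apply grz0; start. destruct (sat_dec v (Var p)) as [H|H].
      * exists (Var p); split; [inapp; tauto| auto].
      * exists (Neg (Var p)); split; [inapp; tauto| apply sat_neg; auto].
    + apply grz0; start. exfalso.
      assert (H1 : sat v (Neg (Var p))) by (apply HL; inapp; tauto).
      rewrite sat_neg in H1; apply H1, HL; inapp; tauto.
  - exists Top; split; [apply pol_top|split].
    + apply grz0; start; exists Top; split; [inapp; tauto| apply sat_top].
    + apply grz0; start; exists (Var p); split; [inapp; tauto| apply HL; inapp; tauto].
Qed.

Lemma case_bot L1 L2 G1 D1 G2 D2 :
  In Bot (G1 ++ G2) -> Interp L1 L2 G1 D1 G2 D2.
Proof.
  intros HG; apply in_app_iff in HG as [HG|HG].
  - exists Bot; split; [apply pol_bot|split].
    + apply grz0; start. exfalso; apply (sat_bot v); apply HL; inapp; tauto.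
    + apply grz0; start. exfalso; apply (sat_bot v); apply HL; inapp; tauto.
  - exists Top; split; [apply pol_top|split].
    + apply grz0; start; exists Top; split; [inapp; tauto| apply sat_top].
    + apply grz0; start. exfalso; apply (sat_bot v); apply HL; inapp; tauto.
Qed.

Lemma case_impL1 L1 L2 A B G01 D1 G2 D2 :
  Interp L1 L2 (B::G01) D1 G2 D2 -> Interp L1 L2 G01 (A::D1) G2 D2 ->
  Interp L1 L2 (Imp A B :: G01) D1 G2 D2.
Proof.
  intros [K1 [P1 [H11 H12]]] [K2 [P2 [H21 H22]]]. exists (Or K1 K2); split; [|split].
  - apply pol_or; polfin.
  - apply (grz2 _ _ _ H11 H21); intros v S1 S2; rewrite sat_der in *; unfold SatSeq in *; intros HL.
    destruct S2 as [x [Hx Hs]]; [ctx|]. inapp. destruct Hx as [[<-|Hx]|[<-|[]]].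
    + assert (HB : sat v B).
      { assert (HI : sat v (Imp A B)) by (apply HL; inapp; tauto). rewrite sat_imp in HI; auto. }
      destruct S1 as [y [Hy Hs']]; [intros z Hz; inapp; destruct Hz as [Hz|[<-|Hz]]; auto; apply HL; inapp; tauto|].
      inapp. destruct Hy as [Hy|[<-|[]]]; [fin y| exists (Or K1 K2); split; [inapp; tauto| apply sat_or; auto]].
    + fin x.
    + exists (Or K1 K2); split; [inapp; tauto| apply sat_or; auto].
  - apply (grz2 _ _ _ H12 H22); intros v S1 S2; rewrite sat_der in *; unfold SatSeq in *; intros HL.
    assert (HO : sat v (Or K1 K2)) by (apply HL; inapp; tauto). apply sat_or in HO as [HO|HO].
    + apply S1; intros z Hz; inapp; destruct Hz as [Hz|[<-|Hz]]; auto; apply HL; inapp; tauto.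
    + apply S2; intros z Hz; inapp; destruct Hz as [Hz|[<-|Hz]]; auto; apply HL; inapp; tauto.
Qed.

Lemma case_impL2 L1 L2 A B G1 D1 G02 D2 :
  Interp L1 L2 G1 D1 (B::G02) D2 -> Interp L1 L2 G1 D1 G02 (A::D2) ->
  Interp L1 L2 G1 D1 (Imp A B :: G02) D2.
Proof.
  intros [K1 [P1 [H11 H12]]] [K2 [P2 [H21 H22]]]. exists (And K1 K2); split; [|split].
  - apply pol_and; polfin.
  - apply (grz2 _ _ _ H11 H21); intros v S1 S2; rewrite sat_der in *; unfold SatSeq in *; intros HL.
    destruct S1 as [x [Hx Hs]]; [ctx|]. inapp. destruct Hx as [Hx|[<-|[]]]; [fin x|].
    destruct S2 as [y [Hy Hs']]; [ctx|]. inapp. destruct Hy as [Hy|[<-|[]]]; [fin y|].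
    exists (And K1 K2); split; [inapp; tauto| apply sat_and; auto].
  - apply (grz2 _ _ _ H12 H22); intros v S1 S2; rewrite sat_der in *; unfold SatSeq in *; intros HL.
    assert (HO : sat v (And K1 K2)) by (apply HL; inapp; tauto). apply sat_and in HO as [HO1 HO2].
    destruct S2 as [x [Hx Hs]].
    { intros z Hz; inapp; destruct Hz as [Hz|[<-|Hz]]; auto; apply HL; inapp; tauto. }
    simpl in Hx. destruct Hx as [<-|Hx]; [|exists x; auto].
    assert (HB : sat v B).
    { assert (HI : sat v (Imp A B)) by (apply HL; inapp; tauto). rewrite sat_imp in HI; auto. }
    apply S1; intros z Hz; inapp; destruct Hz as [Hz|[<-|[<-|Hz]]]; first [assumption | apply HL; inapp; tauto].
Qed.

Lemma case_impR1 L1 L2 A B G1 D01 G2 D2 :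
  Interp L1 L2 (A::G1) (B::D01) G2 D2 -> Interp L1 L2 G1 (Imp A B :: D01) G2 D2.
Proof.
  intros [K [P [H1 H2]]]. exists K; split; [|split].
  - polfin.
  - apply (grz1 _ _ H1); intros v S1; rewrite sat_der in *; unfold SatSeq in *; intros HL.
    destruct (sat_dec v A) as [HA|HA].
    + destruct S1 as [x [Hx Hs]].
      { intros z Hz; inapp; destruct Hz as [Hz|[<-|Hz]]; auto; apply HL; inapp; tauto. }
      inapp. destruct Hx as [[<-|Hx]|[<-|[]]].
      * exists (Imp A B); split; [inapp; tauto| apply sat_imp; auto].
      * fin x.
      * fin K.
    + exists (Imp A B); split; [inapp; tauto| apply sat_imp; tauto].
  - exact H2.
Qed.

Lemma case_impR2 L1 L2 A B G1 D1 G2 D02 :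
  Interp L1 L2 G1 D1 (A::G2) (B::D02) -> Interp L1 L2 G1 D1 G2 (Imp A B :: D02).
Proof.
  intros [K [P [H1 H2]]]. exists K; split; [|split].
  - polfin.
  - exact H1.
  - apply (grz1 _ _ H2); intros v S1; rewrite sat_der in *; unfold SatSeq in *; intros HL.
    destruct (sat_dec v A) as [HA|HA].
    + destruct S1 as [x [Hx Hs]].
      { intros z Hz; inapp; destruct Hz as [Hz|[<-|[<-|Hz]]]; auto; apply HL; inapp; tauto. }
      inapp. destruct Hx as [<-|Hx].
      * exists (Imp A B); split; [inapp; tauto| apply sat_imp; auto].
      * fin x.
    + exists (Imp A B); split; [inapp; tauto| apply sat_imp; tauto].
Qed.

Lemma case_refl1 L1 L2 B G01 D1 G2 D2 :
  Interp L1 L2 (B :: Box B :: G01) D1 G2 D2 -> Interp L1 L2 (Box B :: G01) D1 G2 D2.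
Proof.
  intros [K [P [H1 H2]]]. exists K; split; [|split].
  - polfin.
  - apply (grz2 _ _ _ H1 (Grz_T B)); intros v S1 T; rewrite sat_der in *; unfold SatSeq in *; intros HL.
    rewrite sat_imp in T. apply S1.
    intros z Hz; inapp; destruct Hz as [Hz|[<-|Hz]]; first [apply HL; inapp; tauto | apply T, HL; inapp; tauto].
  - exact H2.
Qed.

Lemma case_refl2 L1 L2 B G1 D1 G02 D2 :
  Interp L1 L2 G1 D1 (B :: Box B :: G02) D2 -> Interp L1 L2 G1 D1 (Box B :: G02) D2.
Proof.
  intros [K [P [H1 H2]]]. exists K; split; [|split].
  - polfin.
  - exact H1.
  - apply (grz2 _ _ _ H2 (Grz_T B)); intros v S1 T; rewrite sat_der in *; unfold SatSeq in *; intros HL.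
    rewrite sat_imp in T. apply S1.
    intros z Hz; inapp; destruct Hz as [Hz|[<-|[<-|Hz]]]; first [apply HL; inapp; tauto | apply T, HL; inapp; tauto].
Qed.

Lemma case_box1_in L1 L2 A G1 D1 G2 D2 :
  In A L1 -> Interp L1 L2 G1 (A::D1) G2 D2 -> Interp L1 L2 G1 (Box A :: D1) G2 D2.
Proof.
  intros HA [K [P [H1 H2]]]. exists K; split; [|split].
  - polfin.
  - apply (grz2 _ _ _ H1 (Grz_T (Imp A (Box A)))); intros v S1 T; rewrite sat_der in *; unfold SatSeq in *; intros HL.
    destruct S1 as [x [Hx Hs]]; [exact HL|].
    inapp. destruct Hx as [[<-|Hx]|[<-|[]]].
    + exists (Box A); split; [inapp; tauto|].
      rewrite sat_imp in T. specialize (T (HL (star A) ltac:(apply in_app_iff; left; apply in_map; auto))).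
      rewrite sat_imp in T; auto.
    + fin x.
    + fin K.
  - exact H2.
Qed.

Lemma case_box2_in L1 L2 A G1 D1 G2 D2 :
  In A L2 -> Interp L1 L2 G1 D1 G2 (A::D2) -> Interp L1 L2 G1 D1 G2 (Box A :: D2).
Proof.
  intros HA [K [P [H1 H2]]]. exists K; split; [|split].
  - polfin.
  - exact H1.
  - apply (grz2 _ _ _ H2 (Grz_T (Imp A (Box A)))); intros v S1 T; rewrite sat_der in *; unfold SatSeq in *; intros HL.
    destruct S1 as [x [Hx Hs]]; [exact HL|].
    inapp. destruct Hx as [<-|Hx].
    + exists (Box A); split; [inapp; tauto|].
      rewrite sat_imp in T. specialize (T (HL (star A) ltac:(apply in_app_iff; left; apply in_map; auto))).
      rewrite sat_imp in T; auto.
    + fin x.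
Qed.

Lemma case_box1_new L1 L2 A G01 Pi1 D01 G02 Pi2 D2 :
  Interp (A::L1) L2 (map Box Pi1) [A] (map Box Pi2) [] ->
  Interp L1 L2 (G01 ++ map Box Pi1) (Box A :: D01) (G02 ++ map Box Pi2) D2.
Proof.
  intros [J [P [H1 H2]]]. exists (Dia J); split; [|split].
  - apply pol_dia; polfin.
  - set (C1 := map (fun x => Imp x (Box x)) L1 ++ Pi1).
    assert (F1 : Grz (Imp (bigwedge (map Box C1)) (Imp (star A) (Or A J)))).
    { apply (grz1 _ _ H1); intros v S1; rewrite sat_der in S1; unfold SatSeq in S1.
      rewrite sat_imp, sat_wedge; intros HC; rewrite sat_imp; intros HS; apply sat_or.
      unfold C1 in HC; rewrite <- map_star_box in HC.
      destruct S1 as [x [Hx Hs]].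
      { simpl; intros z [<-|Hz]; auto. }
      simpl in Hx; destruct Hx as [<-|[<-|[]]]; auto. }
    apply box_lift in F1.
    assert (F2 : Grz (imps [Box (Imp (star A) (Or A J)); Box (Neg J)] (Box (Imp (star A) A)))).
    { apply (box_imps [Imp (star A) (Or A J); Neg J]). apply grz0; intros v.
      rewrite sat_imps; intros H; simpl in H.
      assert (Ha := H _ (or_introl eq_refl)); assert (Hb := H _ (or_intror (or_introl eq_refl))).
      rewrite sat_imp in *; rewrite sat_neg in Hb; intros Hs; specialize (Ha Hs); apply sat_or in Ha; tauto. }
    apply (grz3 _ _ _ _ F1 F2 (Grz_grz A)); intros v S1 S2 S3; rewrite sat_der; intros HL.
    assert (HC : sat v (bigwedge (map Box C1))).
    { apply sat_wedge; unfold C1; rewrite <- map_star_box; intros z Hz; apply HL; inapp; tauto. }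
    rewrite sat_imp in S1; specialize (S1 HC).
    destruct (sat_dec v (Box (Neg J))) as [HN|HN].
    + rewrite sat_imps in S2. assert (S2' := S2 ltac:(simpl; intros z [<-|[<-|[]]]; auto)).
      rewrite sat_imp in S3. exists (Box A); split; [inapp; tauto| apply S3; exact S2'].
    + exists (Dia J); split; [inapp; tauto| unfold Dia; apply sat_neg; exact HN].
  - set (C2 := map (fun x => Imp x (Box x)) L2 ++ Pi2).
    assert (F1 : Grz (Imp (bigwedge (map Box C2)) (Neg J))).
    { apply (grz1 _ _ H2); intros v S1; rewrite sat_der in S1; unfold SatSeq in S1.
      rewrite sat_imp, sat_wedge; intros HC; rewrite sat_neg; intros HJ.
      unfold C2 in HC; rewrite <- map_star_box in HC.
      destruct S1 as [x [[] _]].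
      intros z Hz; inapp; destruct Hz as [Hz|[<-|Hz]]; auto; apply HC; inapp; tauto. }
    apply box_lift in F1.
    apply (grz1 _ _ F1); intros v S1; rewrite sat_der; intros HL; exfalso.
    assert (HC : sat v (bigwedge (map Box C2))).
    { apply sat_wedge; unfold C2; rewrite <- map_star_box; intros z Hz; apply HL; inapp; tauto. }
    rewrite sat_imp in S1; specialize (S1 HC).
    assert (HD : sat v (Dia J)) by (apply HL; inapp; tauto).
    unfold Dia in HD; rewrite sat_neg in HD; auto.
Qed.

Lemma case_box2_new L1 L2 A G01 Pi1 D1 G02 Pi2 D02 :
  Interp L1 (A::L2) (map Box Pi1) [] (map Box Pi2) [A] ->
  Interp L1 L2 (G01 ++ map Box Pi1) D1 (G02 ++ map Box Pi2) (Box A :: D02).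
Proof.
  intros [J [P [H1 H2]]]. exists (Box J); split; [|split].
  - apply pol_box; polfin.
  - set (C1 := map (fun x => Imp x (Box x)) L1 ++ Pi1).
    assert (F1 : Grz (Imp (bigwedge (map Box C1)) J)).
    { apply (grz1 _ _ H1); intros v S1; rewrite sat_der in S1; unfold SatSeq in S1.
      rewrite sat_imp, sat_wedge; intros HC.
      unfold C1 in HC; rewrite <- map_star_box in HC.
      destruct S1 as [x [Hx Hs]]; [exact HC|].
      simpl in Hx; destruct Hx as [<-|[]]; auto. }
    apply box_lift in F1.
    apply (grz1 _ _ F1); intros v S1; rewrite sat_der; intros HL.
    assert (HC : sat v (bigwedge (map Box C1))).
    { apply sat_wedge; unfold C1; rewrite <- map_star_box; intros z Hz; apply HL; inapp; tauto. }
    rewrite sat_imp in S1; specialize (S1 HC).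
    exists (Box J); split; [inapp; tauto| auto].
  - set (C2 := map (fun x => Imp x (Box x)) L2 ++ Pi2).
    assert (F1 : Grz (Imp (bigwedge (map Box C2)) (Imp J (Imp (star A) A)))).
    { apply (grz1 _ _ H2); intros v S1; rewrite sat_der in S1; unfold SatSeq in S1.
      rewrite sat_imp, sat_wedge; intros HC; rewrite sat_imp; intros HJ; rewrite sat_imp; intros HS.
      unfold C2 in HC; rewrite <- map_star_box in HC.
      destruct S1 as [x [Hx Hs]].
      { simpl; intros z [<-|Hz]; auto. inapp; destruct Hz as [Hz|[<-|Hz]]; auto; apply HC; inapp; tauto. }
      simpl in Hx; destruct Hx as [<-|[]]; auto. }
    apply box_lift in F1.
    assert (F2 : Grz (imps [Box (Imp J (Imp (star A) A)); Box J] (Box (Imp (star A) A)))).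
    { apply (box_imps [Imp J (Imp (star A) A); J]). apply grz0; intros v.
      rewrite sat_imps; intros H; simpl in H.
      assert (Ha := H _ (or_introl eq_refl)); assert (Hb := H _ (or_intror (or_introl eq_refl))).
      rewrite sat_imp in Ha; auto. }
    apply (grz3 _ _ _ _ F1 F2 (Grz_grz A)); intros v S1 S2 S3; rewrite sat_der; intros HL.
    assert (HC : sat v (bigwedge (map Box C2))).
    { apply sat_wedge; unfold C2; rewrite <- map_star_box; intros z Hz; apply HL; inapp; tauto. }
    rewrite sat_imp in S1; specialize (S1 HC).
    rewrite sat_imps in S2. assert (S2' := S2 ltac:(simpl; intros z [<-|[<-|[]]]; auto; apply HL; inapp; tauto)).
    rewrite sat_imp in S3. exists (Box A); split; [inapp; tauto| apply S3; exact S2'].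
Qed.

Lemma perm_split1 {T} (a : T) Y U V : Permutation (a :: Y) (U ++ V) ->
  (exists U', Permutation U (a :: U') /\ Permutation Y (U' ++ V)) \/
  (exists V', Permutation V (a :: V') /\ Permutation Y (U ++ V')).
Proof.
  intros HP. assert (Ha : In a (U ++ V)) by (eapply Permutation_in; eauto; left; auto).
  apply in_app_iff in Ha as [Ha|Ha]; apply in_split in Ha as [l1 [l2 ->]].
  - left; exists (l1 ++ l2); split; [apply Permutation_sym, Permutation_middle|].
    apply (Permutation_cons_inv (a:=a)). rewrite HP. rewrite <- !app_assoc. simpl.
    apply Permutation_sym. apply Permutation_middle.
  - right; exists (l1 ++ l2); split; [apply Permutation_sym, Permutation_middle|].
    apply (Permutation_cons_inv (a:=a)). rewrite HP, !app_assoc.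
    apply Permutation_sym, Permutation_middle.
Qed.

Lemma perm_split {T} (X Y U V : list T) : Permutation (X ++ Y) (U ++ V) ->
  exists X1 X2 Y1 Y2, Permutation X (X1 ++ X2) /\ Permutation Y (Y1 ++ Y2) /\
    Permutation U (X1 ++ Y1) /\ Permutation V (X2 ++ Y2).
Proof.
  revert U V; induction X as [|x X IH]; intros U V HP.
  - exists [], [], U, V; simpl; repeat split; auto.
  - simpl in HP. apply perm_split1 in HP as [[U' [H1 H2]]|[V' [H1 H2]]].
    + destruct (IH _ _ H2) as [X1 [X2 [Y1 [Y2 [A1 [A2 [A3 A4]]]]]]].
      exists (x :: X1), X2, Y1, Y2; repeat split; simpl; auto.
      rewrite H1; auto.
    + destruct (IH _ _ H2) as [X1 [X2 [Y1 [Y2 [A1 [A2 [A3 A4]]]]]]].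
      exists X1, (x :: X2), Y1, Y2; repeat split; simpl; auto.
      * rewrite A1. apply Permutation_cons_app; auto.
      * rewrite H1; auto.
Qed.

Lemma perm4 {T} (a b c d : list T) : Permutation ((a ++ b) ++ (c ++ d)) ((a ++ c) ++ (b ++ d)).
Proof.
  rewrite <- !app_assoc. apply Permutation_app_head. apply Permutation_app_swap_app.
Qed.

Definition formula_eq_dec : forall x y : formula, {x = y} + {x <> y}.
Proof. decide equality; apply Nat.eq_dec. Defined.

Definition closedS (S : list formula) := forall x, In x S ->
  (forall a b, x = Imp a b -> In a S /\ In b S) /\ (forall a, x = Box a -> In a S).

Definition inS (S : list formula) (s : sequent) := forall x, In x (fst s) \/ In x (snd s) -> In x S.

Definition meas (S L : list formula) :=
  length (filter (fun x => if in_dec formula_eq_dec x L then false else true) S).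

Lemma filter_lt {T} (f g : T -> bool) (S : list T) :
  (forall x, f x = true -> g x = true) -> forall a, In a S -> g a = true -> f a = false ->
  length (filter f S) < length (filter g S).
Proof.
  intros Hfg a; induction S as [|y S IH]; simpl; [intros []|].
  assert (Hle : forall l, length (filter f l) <= length (filter g l)).
  { induction l as [|z l IHl]; simpl; auto. destruct (f z) eqn:E1.
    - rewrite (Hfg _ E1); simpl; lia.
    - destruct (g z); simpl; lia. }
  intros [<-|Ha] Hg Hf.
  - rewrite Hg, Hf; simpl. specialize (Hle S); lia.
  - specialize (IH Ha Hg Hf). destruct (f y) eqn:E1.
    + rewrite (Hfg _ E1); simpl; lia.
    + destruct (g y); simpl; lia.
Qed.

Lemma meas_lt S L A : In A S -> ~ In A L -> meas S (A :: L) < meas S L.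
Proof.
  intros HS HL. unfold meas. apply (filter_lt _ _ _ ) with (a := A); auto.
  - intros x. destruct (in_dec formula_eq_dec x (A :: L)) as [H1|H1]; [discriminate|].
    destruct (in_dec formula_eq_dec x L) as [H2|H2]; auto. exfalso; apply H1; right; auto.
  - destruct (in_dec formula_eq_dec A L); tauto.
  - destruct (in_dec formula_eq_dec A (A :: L)) as [_|H]; auto. exfalso; apply H; left; auto.
Qed.

Fixpoint subf (A : formula) : list formula :=
  A :: match A with Imp B C => subf B ++ subf C | Box B => subf B | _ => [] end.

Lemma subf_refl A : In A (subf A).
Proof. destruct A; simpl; auto. Qed.

Lemma subf_trans A x y : In x (subf A) -> In y (subf x) -> In y (subf A).
Proof.
  induction A as [p| |B IHB C IHC|B IHB]; simpl; intros Hx Hy.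
  - destruct Hx as [<-|[]]; auto.
  - destruct Hx as [<-|[]]; auto.
  - destruct Hx as [<-|Hx]; [exact Hy|]. right; apply in_app_iff in Hx as [Hx|Hx]; apply in_app_iff; auto.
  - destruct Hx as [<-|Hx]; [exact Hy|]. right; auto.
Qed.

Lemma closed_subfs l : closedS (flat_map subf l).
Proof.
  intros x Hx. apply in_flat_map in Hx as [F [HF Hx]]. split.
  - intros a b ->. split; apply in_flat_map; exists F; split; auto; eapply subf_trans; eauto; simpl;
    right; apply in_app_iff; auto using subf_refl.
  - intros a ->. apply in_flat_map; exists F; split; auto; eapply subf_trans; eauto; simpl; right; apply subf_refl.
Qed.

Lemma child_inf t b c : inf_proof t -> In (b, c) (children t) -> inf_proof c.
Proof.
  intros [Hlc Hbr] Hin. split.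
  - destruct t as [s cs]. inversion Hlc; subst. apply (H2 (b, c)); auto.
  - intros f bb [Hf0 Hf] n.
    set (f' := fun k => match k with 0 => t | S k => f k end).
    set (b' := fun k => match k with 0 => b | S k => bb k end).
    destruct (Hbr f' b') with (n := S n) as [m [Hm Hb]].
    + split; [reflexivity|]. intros [|k]; simpl; [rewrite Hf0; auto| apply Hf].
    + destruct m as [|m]; [lia|]. exists m; split; [lia| exact Hb].
Qed.

Definition Rf (a b : ptree) := In (false, a) (children b).

Lemma not_acc_step x : ~ Acc Rf x -> exists y, Rf y x /\ ~ Acc Rf y.
Proof.
  intros H. apply NNPP; intros H2. apply H; constructor; intros y Hy.
  apply NNPP; intros H3. apply H2; eauto.
Qed.

Lemma inf_acc t : inf_proof t -> Acc Rf t.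
Proof.
  intros [_ Hbr]. apply NNPP; intros H0.
  assert (g : {x | ~ Acc Rf x} -> {x | ~ Acc Rf x}).
  { intros [x Hx]. destruct (constructive_indefinite_description _ (not_acc_step x Hx)) as [y [_ Hy]].
    exact (exist _ y Hy). }
  set (g' := fun (x : {x | ~ Acc Rf x}) =>
     let (x0, Hx) := x in
     let (y, Hy) := constructive_indefinite_description _ (not_acc_step x0 Hx) in
     exist (fun z => ~ Acc Rf z) y (proj2 Hy)).
  assert (Hg' : forall x, Rf (proj1_sig (g' x)) (proj1_sig x)).
  { intros [x Hx]. unfold g'. destruct (constructive_indefinite_description _ _) as [y [Hy1 Hy2]]. exact Hy1. }
  set (f := fun n => proj1_sig (Nat.iter n g' (exist _ t H0))).
  destruct (Hbr f (fun _ => false)) with (n := 0) as [m [_ Hm]]; [|discriminate].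
  split; [reflexivity|]. intros n. unfold f. simpl. apply Hg'.
Qed.

Ltac insolve := let x := fresh "x" in let Hx := fresh "Hx" in
  intros x Hx; simpl in Hx; rewrite ?in_app_iff in Hx; simpl in Hx;
  repeat match type of Hx with _ \/ _ => destruct Hx as [Hx|Hx] | False => destruct Hx | _ = _ => subst x end;
  eauto.

Lemma main S (HS : closedS S) : forall n L1 L2, meas S L1 + meas S L2 = n ->
  forall t, inf_proof t -> inS S (root t) ->
  forall G1 G2 D1 D2, Permutation (fst (root t)) (G1 ++ G2) -> Permutation (snd (root t)) (D1 ++ D2) ->
  Interp L1 L2 G1 D1 G2 D2.
Proof.
  intros n; induction n as [n IHn] using (well_founded_induction lt_wf).
  intros L1 L2 Hn t Ht. generalize (inf_acc t Ht). intros Hacc. revert Ht.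
  induction Hacc as [t _ IHt]. intros Ht Hin G1 G2 D1 D2 PG PD.
  assert (Hch : forall b c, In (b, c) (children t) -> inf_proof c) by (intros; eapply child_inf; eauto).
  destruct Ht as [Hlc _]. destruct t as [[G D] cs]. inversion Hlc as [s cs' Hstep Hcs]; subst. clear Hcs Hlc.
  simpl in PG, PD, Hin, Hch. unfold Rf in IHt; simpl in IHt.
  assert (HinG : forall x, In x G -> In x S) by (intros x Hx; apply Hin; simpl; auto).
  assert (HinD : forall x, In x D -> In x S) by (intros x Hx; apply Hin; simpl; auto).
  clear Hin.
  assert (Himp : forall a b, In (Imp a b) S -> In a S /\ In b S) by (intros a b H; apply (proj1 (HS _ H)); auto).
  assert (Hbox : forall a, In (Box a) S -> In a S) by (intros a H; apply (proj2 (HS _ H)); auto).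
  remember (map (fun c => (fst c, root (snd c))) cs) as ps eqn:Eps.
  remember (G, D) as s eqn:Es.
  destruct Hstep as [G' D' p Hp1 Hp2 | G' D' Hb | G' G0 D' A B H | G' D' D0 A B H | G' G0 D' B H
    | G' G0 Pi D' D0 A H H0]; injection Es; intros; subst.
  - apply (case_ax _ _ _ _ _ _ p); eapply Permutation_in; eauto.
  - apply case_bot; eapply Permutation_in; eauto.
  - destruct cs as [|[b1 t1] [|[b2 t2] [|? ?]]]; simpl in Eps; try discriminate.
    injection Eps as Eb1 E1 Eb2 E2; subst b1 b2.
    assert (HAB : In (Imp A B) S) by (apply HinG; eapply Permutation_in; [apply Permutation_sym, H| left; auto]).
    destruct (Himp _ _ HAB) as [HA HB].
    assert (HG0 : forall x, In x G0 -> In x S) by (intros x Hx; apply HinG; eapply Permutation_in; [apply Permutation_sym, H| right; auto]).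
    assert (PG' : Permutation (Imp A B :: G0) (G1 ++ G2)) by (eapply Permutation_trans; [apply Permutation_sym, H| exact PG]).
    assert (I1 : inS S (root t1)) by (rewrite <- E1; insolve).
    assert (I2 : inS S (root t2)) by (rewrite <- E2; insolve).
    assert (C1 : inf_proof t1) by (apply (Hch false); simpl; auto).
    assert (C2 : inf_proof t2) by (apply (Hch false); simpl; auto).
    destruct (perm_split1 _ _ _ _ PG') as [[U [HU1 HU2]]|[V [HV1 HV2]]].
    + apply (Interp_perm L1 L2 (Imp A B :: U) D1 G2 D2); auto using Permutation_sym.
      apply case_impL1.
      * apply (IHt t1); simpl; auto; rewrite <- E1; simpl; auto.
      * apply (IHt t2); simpl; auto; rewrite <- E2; simpl; auto.
    + apply (Interp_perm L1 L2 G1 D1 (Imp A B :: V) D2); auto using Permutation_sym.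
      apply case_impL2.
      * apply (IHt t1); simpl; auto; rewrite <- E1; simpl; auto using Permutation_cons_app.
      * apply (IHt t2); simpl; auto; rewrite <- E2; simpl; auto using Permutation_cons_app.
  - destruct cs as [|[b1 t1] [|? ?]]; simpl in Eps; try discriminate.
    injection Eps as Eb1 E1; subst b1.
    assert (HAB : In (Imp A B) S) by (apply HinD; eapply Permutation_in; [apply Permutation_sym, H| left; auto]).
    destruct (Himp _ _ HAB) as [HA HB].
    assert (HD0 : forall x, In x D0 -> In x S) by (intros x Hx; apply HinD; eapply Permutation_in; [apply Permutation_sym, H| right; auto]).
    assert (PD' : Permutation (Imp A B :: D0) (D1 ++ D2)) by (eapply Permutation_trans; [apply Permutation_sym, H| exact PD]).
    assert (I1 : inS S (root t1)) by (rewrite <- E1; insolve).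
    assert (C1 : inf_proof t1) by (apply (Hch false); simpl; auto).
    destruct (perm_split1 _ _ _ _ PD') as [[U [HU1 HU2]]|[V [HV1 HV2]]].
    + apply (Interp_perm L1 L2 G1 (Imp A B :: U) G2 D2); auto using Permutation_sym.
      apply case_impR1.
      apply (IHt t1); simpl; auto; rewrite <- E1; simpl; auto.
    + apply (Interp_perm L1 L2 G1 D1 G2 (Imp A B :: V)); auto using Permutation_sym.
      apply case_impR2.
      apply (IHt t1); simpl; auto; rewrite <- E1; simpl; auto using Permutation_cons_app.
  - destruct cs as [|[b1 t1] [|? ?]]; simpl in Eps; try discriminate.
    injection Eps as Eb1 E1; subst b1.
    assert (HBB : In (Box B) S) by (apply HinG; eapply Permutation_in; [apply Permutation_sym, H| left; auto]).
    assert (HB := Hbox _ HBB).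
    assert (HG0 : forall x, In x G0 -> In x S) by (intros x Hx; apply HinG; eapply Permutation_in; [apply Permutation_sym, H| right; auto]).
    assert (PG' : Permutation (Box B :: G0) (G1 ++ G2)) by (eapply Permutation_trans; [apply Permutation_sym, H| exact PG]).
    assert (I1 : inS S (root t1)) by (rewrite <- E1; insolve).
    assert (C1 : inf_proof t1) by (apply (Hch false); simpl; auto).
    destruct (perm_split1 _ _ _ _ PG') as [[U [HU1 HU2]]|[V [HV1 HV2]]].
    + apply (Interp_perm L1 L2 (Box B :: U) D1 G2 D2); auto using Permutation_sym.
      apply case_refl1.
      apply (IHt t1); simpl; auto; rewrite <- E1; simpl; auto.
    + apply (Interp_perm L1 L2 G1 D1 (Box B :: V) D2); auto using Permutation_sym.
      apply case_refl2.
      apply (IHt t1); simpl; auto; rewrite <- E1; simpl; auto using Permutation_cons_app.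
  - destruct cs as [|[b1 t1] [|[b2 t2] [|? ?]]]; simpl in Eps; try discriminate.
    injection Eps as Eb1 E1 Eb2 E2; subst b1 b2.
    assert (HBA : In (Box A) S) by (apply HinD; eapply Permutation_in; [apply Permutation_sym, H0| left; auto]).
    assert (HA := Hbox _ HBA).
    assert (HD0 : forall x, In x D0 -> In x S) by (intros x Hx; apply HinD; eapply Permutation_in; [apply Permutation_sym, H0| right; auto]).
    assert (HG0 : forall x, In x G0 -> In x S) by (intros x Hx; apply HinG; eapply Permutation_in; [apply Permutation_sym, H| apply in_app_iff; auto]).
    assert (HPi : forall x, In x (map Box Pi) -> In x S) by (intros x Hx; apply HinG; eapply Permutation_in; [apply Permutation_sym, H| apply in_app_iff; auto]).
    assert (I1 : inS S (root t1)) by (rewrite <- E1; insolve).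
    assert (I2 : inS S (root t2)) by (rewrite <- E2; insolve).
    assert (C1 : inf_proof t1) by (apply (Hch false); simpl; auto).
    assert (C2 : inf_proof t2) by (apply (Hch true); simpl; auto).
    assert (PG' : Permutation (G0 ++ map Box Pi) (G1 ++ G2)) by (eapply Permutation_trans; [apply Permutation_sym, H| exact PG]).
    assert (PD' : Permutation (Box A :: D0) (D1 ++ D2)) by (eapply Permutation_trans; [apply Permutation_sym, H0| exact PD]).
    destruct (perm_split _ _ _ _ PG') as [X1 [X2 [Y1 [Y2 [A1 [A2 [A3 A4]]]]]]].
    destruct (Permutation_map_inv _ _ (Permutation_sym A2)) as [l3 [El3 Pl3]].
    symmetry in El3. destruct (map_eq_app _ _ _ _ El3) as [Pi1 [Pi2 [-> [<- <-]]]].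
    assert (PPi : Permutation (map Box Pi) (map Box Pi1 ++ map Box Pi2)) by (rewrite <- map_app; apply Permutation_map; exact Pl3).
    assert (PL : Permutation (G0 ++ map Box Pi) ((X1 ++ map Box Pi1) ++ (X2 ++ map Box Pi2))).
    { eapply Permutation_trans; [|apply perm4]. apply Permutation_app; auto. }
    destruct (perm_split1 _ _ _ _ PD') as [[U [HU1 HU2]]|[V [HV1 HV2]]].
    + apply (Interp_perm L1 L2 (X1 ++ map Box Pi1) (Box A :: U) (X2 ++ map Box Pi2) D2); auto using Permutation_sym.
      destruct (in_dec formula_eq_dec A L1) as [HAL|HAL].
      * apply case_box1_in; auto.
        apply (IHt t1); simpl; auto; rewrite <- E1; simpl; auto.
      * apply case_box1_new.
        apply (IHn (meas S (A :: L1) + meas S L2)) with (t := t2); auto.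
        -- generalize (meas_lt S L1 A HA HAL); lia.
        -- rewrite <- E2; simpl; auto.
        -- rewrite <- E2; simpl; auto.
    + apply (Interp_perm L1 L2 (X1 ++ map Box Pi1) D1 (X2 ++ map Box Pi2) (Box A :: V)); auto using Permutation_sym.
      destruct (in_dec formula_eq_dec A L2) as [HAL|HAL].
      * apply case_box2_in; auto.
        apply (IHt t1); simpl; auto; rewrite <- E1; simpl; auto using Permutation_cons_app.
      * apply case_box2_new.
        apply (IHn (meas S L1 + meas S (A :: L2))) with (t := t2); auto.
        -- generalize (meas_lt S L2 A HA HAL); lia.
        -- rewrite <- E2; simpl; auto.
        -- rewrite <- E2; simpl; auto.
Qed.

Theorem lemma7p1 (L1 L2 G1 G2 D1 D2 : list formula) :
  GrzInf_provable (G1 ++ G2, D1 ++ D2) ->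
  exists I : formula,
    (forall p, pos I p -> negS (G1, D1) p /\ posS (G2, D2) p) /\
    (forall p, neg I p -> posS (G1, D1) p /\ negS (G2, D2) p) /\
    Grz (Imp (bigwedge (map star L1 ++ G1)) (bigvee (D1 ++ [I]))) /\
    Grz (Imp (bigwedge (map star L2 ++ I :: G2)) (bigvee D2)).
Proof.
  intros [t [Hr Ht]].
  set (S := flat_map subf ((G1 ++ G2) ++ (D1 ++ D2))).
  assert (HI : Interp L1 L2 G1 D1 G2 D2).
  { apply (main S (closed_subfs _) _ L1 L2 eq_refl t Ht); rewrite Hr; simpl; auto.
    intros x Hx; simpl in Hx. apply in_flat_map; exists x; split; [apply in_app_iff; exact Hx| apply subf_refl]. }
  destruct HI as [I [[HP HN] [H1 H2]]]. exists I. auto.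
Qed.
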